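(* Let $\Gamma$ be a finite abelian group of order $n=\prod_p p^{v_p}$, and suppose that for each prime $p\mid n$, either $v_p<p-1$, or $p\le 3$ and $v_p<p$. Then every abelian Hopf-Galois structure on a Galois field extension $L/K$ with $\mathrm{Gal}(L/K)\cong\Gamma$ has type $\Gamma$; equivalently, $e_{\mathrm{ab}}(\Gamma)=e(\Gamma,\Gamma)$.
   Context: For finite groups $\Gamma,G$ of the same order, $e(\Gamma,G)$ is the number of Hopf-Galois structures of type $G$ on a Galois field extension with Galois group $\Gamma$; equivalently, the number of $\mathrm{Aut}(G)$-conjugacy classes of injective homomorphisms $\beta:\Gamma\to\mathrm{Hol}(G)$ whose image acts regularly on $G$, where $\mathrm{Hol}(G)=\rho(G)\cdot\mathrm{Aut}(G)\subseteq\mathrm{Perm}(G)$ and $\rho(g)(x)=xg^{-1}$. A Hopf-Galois structure is abelian if its type $G$ is abelian, and $e_{\mathrm{ab}}(\Gamma)=\sum_{G\text{ abelian}} e(\Gamma,G)$ over isomorphism classes of abelian groups $G$ of order $|\Gamma|$. *)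

(* Defs.v *)
From mathcomp Require Import all_boot all_fingroup.
Set Implicit Arguments. Unset Strict Implicit. Unset Printing Implicit Defensive.
Local Open Scope group_scope.

Section Holomorph.
Variable gT : finGroupType.

Definition rho_fun (g : gT) : gT -> gT := fun x => x * g^-1.
Lemma rho_inj (g : gT) : injective (rho_fun g).
Proof. by move=> x y; apply: mulIg. Qed.
Definition rho (g : gT) : {perm gT} := perm (@rho_inj g).

Definition Hol : {set {perm gT}} := (rho @: [set: gT]) * Aut [set: gT].
End Holomorph.

Section Count.
Variables (aT gT : finGroupType) (Gamma : {set aT}).

(* A finite function f : aT -> Perm(G) encodes a map Gamma -> Perm(G)
   (normalised to 1 outside Gamma). *)
Definition regular_emb (f : {ffun aT -> {perm gT}}) : bool :=
  [&& [forall x in Gamma, forall y in Gamma, f (x * y) == f x * f y],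
      [forall x in Gamma, forall y in Gamma, (f x == f y) ==> (x == y)],
      [forall x in Gamma, f x \in Hol gT],
      [forall x : gT, forall y : gT, #|[set g in Gamma | f g x == y]| == 1%N]
    & [forall x in ~: Gamma, f x == 1]].

Definition regular_embs : {set {ffun aT -> {perm gT}}} := [set f | regular_emb f].

Definition aut_conj (f f' : {ffun aT -> {perm gT}}) : bool :=
  [exists a in Aut [set: gT], forall g in Gamma, f' g == f g ^ a].

Definition e_HGS : nat :=
  #|[set [set f' in regular_embs | aut_conj f f'] | f in regular_embs]|.
End Count.

(* Main.v *)
Require Import Defs.
From mathcomp Require Import all_boot all_fingroup all_solvable.
From mathcomp Require Import zify.
Set Implicit Arguments. Unset Strict Implicit. Unset Printing Implicit Defensive.
Local Open Scope group_scope.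

Definition lnO p n (gT : finGroupType) (A : {set gT}) := logn p #|'Ohm_n.+1(A) : 'Ohm_n(A)|.
Definition lni i p (gT : finGroupType) (A : {set gT}) :=
  (\max_(e < logn p #|A| | i < lnO p e A) e.+1)%N.

Lemma nth_abty gT (G : {group gT}) i:
    abelian G -> (i < size (abelian_type G))%N ->
  nth 1%N (abelian_type G) i = (\prod_(p < #|G|.+1) p ^ lni i p G)%N.
Proof.
move=> cGG.
have (p): path leq 0 (map (logn p) (rev (abelian_type G))).
  move: (abelian_type_gt1 G) (abelian_type_dvdn_sorted G).
  case: abelian_type => //= m t; rewrite rev_cons map_rcons.
  elim: t m => //= n t IHt m /andP[/ltnW m_gt0 nt_gt1].
  rewrite -cats1 cat_path rev_cons map_rcons last_rcons /=.
  by case/andP=> /dvdn_leq_log-> // /IHt->.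
have{cGG} [b defG <- b_sorted] := abelian_structure cGG.
rewrite size_map => ltib; rewrite (nth_map 1 _ _ ltib); set x := nth 1 b i.
have Gx: x \in G.
  have: x \in b by rewrite mem_nth.
  rewrite -(bigdprodWY defG); case/splitPr=> bl br.
  by rewrite mem_gen // big_cat big_cons !inE cycle_id orbT.
have lexG: (#[x] <= #|G|)%N by rewrite dvdn_leq ?order_dvdG.
rewrite -[#[x]]partn_pi // (widen_partn _ lexG) big_mkord big_mkcond.
apply: eq_bigr => p _; transitivity (p ^ logn p #[x])%N.
  by rewrite -logn_gt0; case: posnP => // ->.
suffices lti_lnO e: (i < lnO p e G) = (e < logn p #[x]).
  congr (p ^ _)%N; apply/eqP; rewrite eqn_leq andbC; apply/andP; split.
    by apply/bigmax_leqP=> e; rewrite lti_lnO.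
  have [-> //|logx_gt0] := posnP (logn p #[x]).
  have lexpG: ((logn p #[x]).-1 < logn p #|G|)%N.
    by rewrite prednK // dvdn_leq_log ?order_dvdG.
  by rewrite (bigmax_sup (Ordinal lexpG)) ?(prednK, lti_lnO).
rewrite /lnO -(count_logn_dprod_cycle _ _ defG).
case: (ltnP e) (b_sorted p) => [lt_e_x | le_x_e].
  rewrite -(cat_take_drop i.+1 b) -map_rev rev_cat !map_cat cat_path.
  case/andP=> _ ordb; rewrite count_cat ((count _ _ =P i.+1) _) ?leq_addr //.
  rewrite -{2}(size_takel ltib) -all_count.
  move: ordb; rewrite (take_nth 1 ltib) -/x rev_rcons all_rcons /= lt_e_x.
  case/andP=> _ /=; move/(order_path_min leq_trans); apply: contraLR.
  rewrite -!has_predC !has_map; case/hasP=> y b_y /= le_y_e; apply/hasP.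
  by exists y; rewrite ?mem_rev //=; apply: contra le_y_e; apply: leq_trans.
rewrite -(cat_take_drop i b) -map_rev rev_cat !map_cat cat_path.
case/andP=> ordb _; rewrite count_cat -{1}(size_takel (ltnW ltib)) ltnNge.
rewrite addnC ((count _ _ =P 0) _) ?count_size //.
rewrite eqn0Ngt -has_count; apply/hasPn=> y b_y /=; rewrite -leqNgt.
apply: leq_trans le_x_e; have ->: x = last x (rev (drop i b)).
  by rewrite (drop_nth 1 ltib) rev_cons last_rcons.
rewrite -mem_rev in b_y; case/splitPr: (rev _) / b_y ordb => b1 b2.
rewrite !map_cat cat_path last_cat /=; case/and3P=> _ _.
move/(order_path_min leq_trans); case/lastP: b2 => // b3 x'.
by move/allP; apply; rewrite ?map_f ?last_rcons ?mem_rcons ?mem_head.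
Qed.

Lemma isog_Ohm_card gT rT (G : {group gT}) (H : {group rT}) :
  abelian G -> abelian H -> #|G| = #|H| ->
  (forall n, #|'Ohm_n(G)| = #|'Ohm_n(H)|) -> G \isog H.
Proof.
move=> cGG cHH eGH eO; rewrite eq_abelian_type_isog //; apply/eqP.
have eq_sz: size (abelian_type G) = size (abelian_type H).
  rewrite !size_abelian_type // /rank eGH; apply: eq_bigr => p _.
  by rewrite !p_rank_abelian // eO.
apply: (@eq_from_nth _ 1%N) => // i lt_i_G; rewrite !nth_abty // -?eq_sz //.
rewrite /lni eGH; apply: eq_bigr => p _; congr (p ^ _)%N.
apply: eq_bigl => e; rewrite /lnO -!divgS ?(Ohm_leq _ (leqnSn _)) //=.
by rewrite !eO.
Qed.

Definition Mn n k := (\prod_(p < k.+1 | prime p) p ^ n)%N.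

Lemma Mn_gt0 n k : (0 < Mn n k)%N.
Proof. by apply: prodn_cond_gt0 => p pp; rewrite expn_gt0 prime_gt0. Qed.

Lemma Mn_split n k p : prime p -> (p <= k)%N ->
  exists2 R, Mn n k = (p ^ n * R)%N & coprime p R.
Proof.
move=> pp lepk; have lt: (p < k.+1)%N by [].
rewrite /Mn (bigD1 (Ordinal lt)) //=; eexists; first reflexivity.
rewrite prime_coprime // Euclid_dvd_prod // big1 // => q /andP[qp nqp].
rewrite Euclid_dvdX // dvdn_prime2 //; apply/negP => /andP[/eqP epq _].
by move: nqp; rewrite -val_eqE /= epq eqxx.
Qed.

Lemma logn_Mn n k p : prime p -> (p <= k)%N -> logn p (Mn n k) = n.
Proof.
move=> pp lepk; have [R -> cpR] := Mn_split n pp lepk.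
have R0 : (0 < R)%N.
  case: R cpR => // /eqP; rewrite gcdn0 => p1; by rewrite p1 in pp.
by rewrite lognM ?expn_gt0 ?(prime_gt0 pp) //; rewrite lognX logn_prime // eqxx muln1 logn_coprime // addn0.
Qed.

Lemma dvd_Mn n k p : prime p -> (p <= k)%N -> (p ^ n %| Mn n k)%N.
Proof. by move=> pp lepk; have [R -> _] := Mn_split n pp lepk; apply: dvdn_mulr. Qed.

Lemma OhmE_ab gT (A : {group gT}) n : abelian A ->
  'Ohm_n(A) = 'Ldiv_(Mn n #|A|)(A).
Proof.
move=> cAA; apply/eqP; rewrite eqEsubset; apply/andP; split.
  rewrite /Ohm -(gen_set_id (group_Ldiv (Mn n #|A|) cAA)) genS //.
  apply/subsetP=> x; rewrite inE => /andP[Ax /eqP xq]; apply/LdivP; split=> //.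
  have [-> | ntx] := eqVneq x 1; first by rewrite expg1n.
  have o1 : (1 < #[x])%N by rewrite order_gt1.
  apply/eqP; rewrite -order_dvdn; apply: dvdn_trans (dvd_Mn _ (pdiv_prime o1) _).
    by rewrite order_dvdn xq.
  apply: leq_trans (pdiv_leq (ltnW o1)) _.
  by rewrite dvdn_leq ?order_dvdG.
apply/subsetP=> x /LdivP[Ax xM].
rewrite -(prod_constt x); apply: group_prod => p _.
have [pp | npp] := boolP (prime p); last first.
  suff -> : x.`_p = 1 by rewrite group1.
  apply/constt1P; apply/pnatP=> // q qp _.
  by rewrite !inE; apply: contraNneq npp => <-.
apply: mem_gen; rewrite inE groupX //=; apply/OhmPredP; exists p => //.
apply/eqP; rewrite -order_dvdn order_constt p_part.
have [lepx | ltxp] := leqP p #[x]; last first.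
  rewrite logn_coprime ?expn0 ?dvd1n // prime_coprime //.
  by apply/negP=> /dvdn_leq; rewrite order_gt0 => /(_ isT); rewrite leqNgt ltxp.
rewrite dvdn_exp2l ?prime_gt1 //.
have lepA : (p <= #|A|)%N by apply: leq_trans lepx _; rewrite dvdn_leq ?order_dvdG.
rewrite -{1}(logn_Mn n pp lepA).
by apply: dvdn_leq_log; [apply: Mn_gt0 | rewrite order_dvdn xM].
Qed.

Lemma isog_of_order_bij (aT gT : finGroupType) (Gam : {group aT}) (t : aT -> gT) :
  abelian Gam -> abelian [set: gT] -> #|[set: gT]| = #|Gam| ->
  {in Gam &, injective t} -> t @: Gam = [set: gT] ->
  {in Gam, forall g, #[t g] = #[g]} -> [set: gT] \isog Gam.
Proof.
move=> cGam cG eG tinj tsurj tord.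
apply: (@isog_Ohm_card _ _ [set: gT]%G Gam) => // n.
rewrite !OhmE_ab // eG.
set M := Mn n #|Gam|.
have -> : 'Ldiv_M([set: gT]) = t @: 'Ldiv_M(Gam).
  apply/setP=> y; apply/idP/idP.
    move=> /LdivP[_ yM].
    have : y \in t @: Gam by rewrite tsurj inE.
    case/imsetP=> g Gg ey; rewrite ey in yM *; apply: imset_f; apply/LdivP; split=> //.
    by apply/eqP; rewrite -order_dvdn -tord // order_dvdn yM.
  case/imsetP=> g /LdivP[Gg gM] ->; apply/LdivP; split; first by rewrite inE.
  by apply/eqP; rewrite -order_dvdn tord // order_dvdn gM.
rewrite card_in_imset //; apply: sub_in2 tinj => g; by case/setIP.
Qed.

Section Main.
Variables (aT gT : finGroupType) (Gam : {group aT}) (f : {ffun aT -> {perm gT}}).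
Hypothesis cGam : abelian Gam.
Hypothesis cG : abelian [set: gT].
Hypothesis Hf : regular_emb Gam f.

Lemma cm (x y : gT) : commute x y.
Proof. exact: (centsP cG) x (in_setT x) y (in_setT y). Qed.
Lemma cmA (x y : aT) : x \in Gam -> y \in Gam -> x * y = y * x.
Proof. by move=> Gx Gy; apply: (centsP cGam) x Gx y Gy. Qed.

Definition t g := f g 1.
Definition A0 g x := f g x * (t g)^-1.
Fact A_key : unit. Proof. by []. Qed.
Definition A := locked_with A_key A0.
Lemma AE g x : A g x = f g x * (t g)^-1.
Proof. by rewrite /A unlock. Qed.

Lemma fM g h : g \in Gam -> h \in Gam -> f (g * h) = f g * f h.
Proof.
move=> Gg Gh; case/and5P: Hf => /forallP/(_ g)/implyP/(_ Gg)/forallP/(_ h).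
by move/implyP/(_ Gh)/eqP.
Qed.

Lemma fHol g : g \in Gam -> f g \in Hol gT.
Proof. by move=> Gg; case/and5P: Hf => _ _ /forallP/(_ g)/implyP/(_ Gg). Qed.

Lemma f_reg x y : #|[set g in Gam | f g x == y]| = 1%N.
Proof. by case/and5P: Hf => _ _ _ /forallP/(_ x)/forallP/(_ y)/eqP. Qed.

Lemma A_aut g : g \in Gam -> exists2 a, a \in Aut [set: gT] & forall x, A g x = a x.
Proof.
move=> /fHol /mulsgP[r a /imsetP[z _ ->] Aa fgE]; exists a => // x.
have aM := morphicP (Aut_morphic Aa).
rewrite AE /t fgE !permM /rho !permE /rho_fun mul1g.
by rewrite aM ?inE // mulgK.
Qed.

Lemma AM g x y : g \in Gam -> A g (x * y) = A g x * A g y.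
Proof.
move=> /A_aut[a Aa aE]; rewrite !aE; apply: (morphicP (Aut_morphic Aa)); exact: in_setT.
Qed.

Lemma fA g x : f g x = A g x * t g.
Proof. by rewrite AE mulgKV. Qed.

Lemma A_inj g : injective (A g).
Proof. by move=> x y; rewrite !AE => /mulIg; apply: perm_inj. Qed.

Lemma A1 g : g \in Gam -> A g 1 = 1.
Proof. by move=> Gg; apply: (mulgI (A g 1)); rewrite -AM // !mulg1. Qed.

Lemma AV g x : g \in Gam -> A g x^-1 = (A g x)^-1.
Proof. by move=> Gg; apply: (mulgI (A g x)); rewrite -AM // !mulgV A1. Qed.

Lemma AX g x n : g \in Gam -> A g (x ^+ n) = (A g x) ^+ n.
Proof. by move=> Gg; elim: n => [|n IH]; rewrite ?A1 // !expgS AM // IH. Qed.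

Lemma ord_A g x : g \in Gam -> #[A g x] = #[x].
Proof.
move=> Gg; apply/eqP; rewrite eqn_dvd !order_dvdn -AX // expg_order A1 // eqxx /=.
by rewrite -(inj_eq (@A_inj g)) AX // expg_order A1.
Qed.

Lemma A_constt g x (pi : nat_pred) : g \in Gam -> A g (x.`_pi) = (A g x).`_pi.
Proof. by move=> Gg; rewrite /constt ord_A // AX. Qed.

Lemma f1 : f 1 = 1.
Proof. by apply: (mulgI (f 1)); rewrite -fM // !mulg1. Qed.

Lemma t1 : t 1 = 1.
Proof. by rewrite /t f1 perm1. Qed.

Lemma fcomp g h x : g \in Gam -> h \in Gam -> f (g * h) x = f h (f g x).
Proof. by move=> Gg Gh; rewrite fM // permM. Qed.

Lemma tM g h : g \in Gam -> h \in Gam -> t (g * h) = A h (t g) * t h.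
Proof. by move=> Gg Gh; rewrite /t fcomp // fA. Qed.

Lemma AMg g h x : g \in Gam -> h \in Gam -> A (g * h) x = A h (A g x).
Proof.
move=> Gg Gh; apply: (mulIg (t (g * h))); rewrite -fA fcomp // tM // mulgA -AM //.
by rewrite -fA fA.
Qed.

Lemma t_surj y : exists2 g, g \in Gam & t g = y.
Proof.
have /cards1P[g eg] : #|[set g in Gam | f g 1 == y]| == 1%N by rewrite f_reg.
have : g \in [set g in Gam | f g 1 == y] by rewrite eg set11.
by rewrite inE => /andP[Gg /eqP tg]; exists g.
Qed.

Lemma t_inj : {in Gam &, injective t}.
Proof.
move=> g h Gg Gh tgh.
have /cards1P[z ez] : #|[set k in Gam | f k 1 == t g]| == 1%N by rewrite f_reg.
have : g \in [set k in Gam | f k 1 == t g] by rewrite inE Gg eqxx.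
have : h \in [set k in Gam | f k 1 == t g] by rewrite inE Gh; apply/eqP; exact: (esym tgh).
by rewrite ez !inE => /eqP -> /eqP ->.
Qed.

Lemma A_1 x : A 1 x = x.
Proof. by rewrite AE t1 f1 perm1 invg1 mulg1. Qed.

Lemma AXg g n x : g \in Gam -> A (g ^+ n) x = iter n (A g) x.
Proof.
move=> Gg; elim: n => [|n IH]; first by rewrite expg0 A_1.
by rewrite expgSr AMg ?groupX // IH.
Qed.

Lemma tXg g n : g \in Gam -> t (g ^+ n.+1) = A g (t (g ^+ n)) * t g.
Proof. by move=> Gg; rewrite expgSr tM ?groupX. Qed.

Lemma cMc (x y : gT) pi : (x * y).`_pi = x.`_pi * y.`_pi.
Proof. exact: consttM (cm x y). Qed.
Section Q.
Variable q : nat.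
Hypothesis qp : prime q.

Definition tau g := (t g).`_q.

Lemma stab_triv k y : k \in Gam -> tau k = 1 -> q.-elt y -> A k y = y.
Proof.
move=> Gk tk qy; have [g Gg tg] := t_surj y.
have e := congr1 (fun z => z.`_q) (congr1 t (cmA Gg Gk)).
move: e; rewrite /= tM // tM // (cMc (A k (t g))) (cMc (A g (t k))).
rewrite -(A_constt _ _ Gk) -(A_constt _ _ Gg) -/(tau k) tk tg.
by rewrite (constt_p_elt qy) A1 // mulg1 mul1g.
Qed.

Lemma tau_mulK g k : g \in Gam -> k \in Gam -> tau k = 1 -> tau (g * k) = tau g.
Proof.
move=> Gg Gk tk; rewrite /tau tM // (cMc (A k (t g))) -(A_constt _ _ Gk) -/(tau k) tk mulg1.
by rewrite stab_triv // p_elt_constt.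
Qed.

Lemma tau_eq g h : g \in Gam -> h \in Gam -> tau g = tau h -> tau (g^-1 * h) = 1.
Proof.
move=> Gg Gh tgh; set k := g^-1 * h; have Gk : k \in Gam by rewrite groupM ?groupV.
have hE : h = k * g by rewrite /k cmA ?groupV // mulKVg.
move: tgh; rewrite hE /tau tM // (cMc (A g (t k))) -(A_constt _ _ Gg) -/(tau k).
move=> e; apply: (@A_inj g); rewrite A1 //; apply: (mulIg ((t g).`_q)).
by rewrite -e mul1g.
Qed.

Definition K := [set g in Gam | tau g == 1].

Lemma K_group : group_set K.
Proof.
apply/group_setP; split; first by rewrite inE group1 /tau t1 constt1 eqxx.
move=> g h; rewrite !inE => /andP[Gg /eqP tg] /andP[Gh /eqP th].
by rewrite groupM // tau_mulK // tg eqxx.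
Qed.
Canonical K_grp := Group K_group.

Definition Gq := [set y : gT | q.-elt y].

Lemma Gq_group : group_set Gq.
Proof.
apply/group_setP; split; first by rewrite inE p_elt1.
by move=> x y; rewrite !inE; apply: p_eltM (cm x y).
Qed.
Canonical Gq_grp := Group Gq_group.

Lemma pgroup_Gq : q.-group Gq.
Proof.
apply/pgroupP=> r rp /(Cauchy rp)[x]; rewrite inE => qx ox.
by rewrite -pnatE // -ox.
Qed.

Lemma KsubG : K \subset Gam.
Proof. by apply/subsetP=> g; rewrite inE => /andP[]. Qed.

Lemma card_GamK : #|Gam| = (#|Gq| * #|K|)%N.
Proof.
rewrite -sum1_card (partition_big tau (fun y => y \in Gq)); last first.
  by move=> g _; rewrite inE p_elt_constt.
rewrite -sum_nat_const; apply: eq_bigr => y; rewrite inE => qy.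
rewrite sum1dep_card; have [g0 Gg0 tg0] := t_surj y.
have ty : tau g0 = y by rewrite /tau tg0 constt_p_elt.
rewrite -(card_lcoset K g0); apply: eq_card => g.
rewrite mem_lcoset !inE; apply/andP/andP=> [[Gg /eqP tg]|[Gk /eqP tk]].
  by rewrite groupM ?groupV // tau_eq // ty tg.
have Gg : g \in Gam by rewrite -(mulKVg g0 g) groupM.
by rewrite Gg -(mulKVg g0 g) tau_mulK // ?groupV ?groupM // ty.
Qed.

Lemma key4 d : d \in Gam -> q^'.-elt d -> tau d = 1.
Proof.
move=> Gd qd; have nKG : Gam \subset 'N(K) := sub_abelian_norm cGam KsubG.
have Nd : d \in 'N(K) := subsetP nKG d Gd.
suff : d \in K by rewrite inE => /andP[_ /eqP].
apply: coset_idr => //; apply/eqP; rewrite -order_eq1; apply/eqP.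
apply: (@pnat_1 q).
  apply: pnat_dvd (order_dvdG (mem_quotient K Gd)) _.
  rewrite card_quotient // -divgS ?KsubG // card_GamK mulnK ?cardG_gt0 //.
  exact: pgroup_Gq.
apply: pnat_dvd qd; exact: (morph_order (coset_morphism K) Nd).
Qed.

End Q.

Lemma key4A q d y : prime q -> d \in Gam -> q^'.-elt d -> q.-elt y -> A d y = y.
Proof. by move=> qp Gd qd qy; apply: (stab_triv Gd (key4 Gd qd) qy). Qed.

Section P.
Variable p : nat.
Hypothesis pp : prime p.
Hypothesis lognp : (logn p #|[set: gT]| < p)%N.
Variable g : aT.
Hypothesis Gg : g \in Gam.
Hypothesis pg : p.-elt g.

Definition N x := A g x * x^-1.
Let c := t g.

Lemma c_pelt : p.-elt c.
Proof.
apply/(pnatP _ (order_gt0 c)) => r rp rd.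
apply/negPn/negP => nrp.
have rg : r^'.-elt g.
  by apply: sub_p_elt pg => z; rewrite !inE => /eqP ->; rewrite eq_sym.
have := key4 Gg rg; rewrite /tau -/c => /constt1P rc.
by move: (pnat_dvd rd rc); rewrite pnatE // !inE eqxx.
Qed.

Lemma NM x y : N (x * y) = N x * N y.
Proof.
rewrite /N AM // invMg -!mulgA; congr (_ * _).
by rewrite (cm y^-1 x^-1) !mulgA (cm (A g y) x^-1).
Qed.

Lemma N1 : N 1 = 1.
Proof. by rewrite /N A1 // invg1 mulg1. Qed.

Lemma iterNM j x y : iter j N (x * y) = iter j N x * iter j N y.
Proof. by elim: j => //= j ->; rewrite NM. Qed.

Lemma iterN1 j : iter j N 1 = 1.
Proof. by elim: j => //= j ->; rewrite N1. Qed.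

Lemma iterNX j x n : iter j N (x ^+ n) = (iter j N x) ^+ n.
Proof. by elim: n => [|n IH]; rewrite ?iterN1 // !expgS iterNM IH. Qed.

Lemma aN x : A g (N x) = N (A g x).
Proof. by rewrite /N AM // AV. Qed.

Lemma a_eq x : A g x = N x * x.
Proof. by rewrite /N mulgKV. Qed.

Definition H i : {set gT} := iter i (fun S : {set gT} => N @: S) (Gq p).

Lemma H_group i : group_set (H i).
Proof.
elim: i => [|i IH]; first exact: Gq_group.
apply/group_setP; split; first by rewrite -N1 imset_f // (group1 (Group IH)).
move=> _ _ /imsetP[x Hx ->] /imsetP[y Hy ->].
by rewrite -NM imset_f // (groupM (G := Group IH)).
Qed.
Canonical HG i := Group (H_group i).

Lemma HS i : H i.+1 = N @: H i.
Proof. by []. Qed.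

Lemma Ha i x : x \in H i -> A g x \in H i.
Proof.
elim: i x => [|i IH] x.
  by rewrite /H /= !inE /p_elt ord_A.
by rewrite HS => /imsetP[y Hy ->]; rewrite aN imset_f // IH.
Qed.

Lemma H_dec i : H i.+1 \subset H i.
Proof.
apply/subsetP=> _ /imsetP[y Hy ->]; rewrite /N.
by rewrite (groupM (G := HG i)) ?groupV // Ha.
Qed.

Lemma H_decn i j : (i <= j)%N -> H j \subset H i.
Proof.
move/subnK <-; elim: (j - i)%N => [|k IH]; first by rewrite add0n.
rewrite addSn; exact: subset_trans (H_dec _) IH.
Qed.

Lemma H_sub i : H i \subset Gq p.
Proof. exact: (H_decn (leq0n i)). Qed.

Lemma iterN_H i j x : x \in H i -> iter j N x \in H (i + j).
Proof.
move=> Hx; elim: j => [|j IH]; first by rewrite addn0.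
by rewrite addnS HS iterS imset_f.
Qed.

Definition ap : {perm gT} := perm (@A_inj g).

Lemma iter_ap n x : iter n ap x = A (g ^+ n) x.
Proof.
elim: n => [|n IH]; first by rewrite expg0 A_1.
by rewrite iterS IH permE expgSr AMg ?groupX.
Qed.

Lemma A_order x : iter #[g] (A g) x = x.
Proof. by rewrite -AXg // expg_order A_1. Qed.

Lemma pap : p.-elt ap.
Proof.
apply: pnat_dvd pg; rewrite order_dvdn; apply/eqP/permP => x.
by rewrite permX perm1 iter_ap expg_order A_1.
Qed.

Lemma iter_Ha i n x : x \in H i -> iter n (A g) x \in H i.
Proof. by move=> Hx; elim: n => //= n IH; apply: Ha. Qed.

Lemma H_acts i : [acts <[ap]>, on H i | 'P].
Proof.
rewrite cycle_subG; apply/astabsP => x; rewrite /= apermE permE.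
apply/idP/idP => [ax | ]; last exact: Ha.
rewrite -(A_order x) -(prednK (order_gt0 g)) iterSr; exact: iter_Ha.
Qed.

Lemma fixpt i : H i != 1 -> exists2 x, x \in H i & (x != 1) && (A g x == x).
Proof.
move=> ntH.
have pap' : p.-group <[ap]> by rewrite /pgroup -orderE; exact: pap.
have := pgroup_fix_mod pap' (H_acts i).
set F := 'Fix_(H i | 'P)(<[ap]>) => eF.
have pH : p.-group (H i) := pgroupS (H_sub i) (pgroup_Gq p).
have dH : (p %| #|H i|)%N.
  have ntH' : #|H i| != 1%N by rewrite -(trivg_card1 (HG i)).
  move: ntH'; rewrite (card_pgroup pH).
  case: (logn p #|H i|) => [|k] nt; first by rewrite expn0 eqxx in nt.
  by rewrite expnS dvdn_mulr.
have dF : (p %| #|F|)%N by rewrite /dvdn -eF.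
have memF x : (x \in F) = (x \in H i) && (A g x == x).
  rewrite inE afix_cycle; congr (_ && _).
  by apply/afix1P/eqP; rewrite /= apermE permE.
case: (pickP [pred x | (x \in F) && (x != 1)]) => [x /andP[Fx nx] | none].
  by move: Fx; rewrite memF => /andP[Hx ax]; exists x => //; rewrite nx ax.
have : (#|F| <= 1)%N.
  rewrite -(cards1 (1 : gT)); apply: subset_leq_card; apply/subsetP=> x Fx.
  by move: (none x); rewrite /= Fx /= => /negbFE /eqP ->; rewrite set11.
have : (0 < #|F|)%N by apply/card_gt0P; exists 1; rewrite memF group1 A1 // eqxx.
move=> h0 h1; have F1 : #|F| = 1%N by apply/eqP; rewrite eqn_leq h1 h0.
by move: dF (prime_gt1 pp); rewrite F1 dvdn1 => /eqP ->.
Qed.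

Lemma H_lt i : H i != 1 -> (#|H i.+1| < #|H i|)%N.
Proof.
move=> ntH; rewrite HS ltn_neqAle leq_imset_card andbT; apply/negP => /imset_injP inj.
have [x Hx /andP[nx /eqP ax]] := fixpt ntH.
have : N x = N 1 by rewrite N1 /N ax mulgV.
by move/inj => /(_ Hx (group1 _)) x1; rewrite x1 eqxx in nx.
Qed.

Lemma logn_H i : (logn p #|H i| <= logn p #|Gq p| - i)%N.
Proof.
elim: i => [|i IH]; first by rewrite subn0.
have [e1|ntH] := eqVneq (H i) 1.
  by rewrite HS e1 imset_set1 N1 cards1 logn1.
have pH j : p.-group (H j) := pgroupS (H_sub j) (pgroup_Gq p).
have lt : (logn p #|H i.+1| < logn p #|H i|)%N.
  by rewrite -(ltn_exp2l _ _ (prime_gt1 pp)) -!card_pgroup ?pH //; apply: H_lt.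
lia.
Qed.

Lemma v_small : (logn p #|Gq p| <= p.-1)%N.
Proof.
have : (logn p #|Gq p| <= logn p #|[set: gT]|)%N.
  by apply: dvdn_leq_log; rewrite ?cardG_gt0 // cardSg ?subsetT.
lia.
Qed.

Lemma H_last : H p.-1 = 1.
Proof.
apply/eqP; rewrite trivg_card1 (card_pgroup (pgroupS (H_sub _) (pgroup_Gq p))).
have := logn_H p.-1; have := v_small.
by move=> h1 h2; have -> : logn p #|H p.-1| = 0%N by lia.
Qed.

Lemma iterN_vanish x : x \in Gq p -> iter p.-1 N x = 1.
Proof.
move=> Gx; have := iterN_H (i := 0) p.-1 Gx; rewrite add0n.
suff -> : H p.-1 = 1 by move/set1P.
apply/eqP; rewrite trivg_card1 (card_pgroup (pgroupS (H_sub _) (pgroup_Gq p))).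
have := logn_H p.-1; have := v_small.
by move=> h1 h2; have -> : logn p #|H p.-1| = 0%N by lia.
Qed.

Lemma c_Gq : c \in Gq p.
Proof. by rewrite inE c_pelt. Qed.

Lemma formula_gen m : iter m.+1 N c = 1 -> forall k,
  t (g ^+ k) = \prod_(j < m.+1) (iter j N c) ^+ 'C(k, j.+1).
Proof.
move=> vc; elim => [|k IH].
  by rewrite expg0 t1 big1 // => j _; rewrite bin0n expg0.
rewrite tXg // IH -/c.
rewrite (big_morph (A g) (fun x y => @AM g x y Gg) (A1 Gg)).
under eq_bigr => j _ do rewrite AX // a_eq (expgMn _ (cm _ _)).
rewrite prodgM_commute; last by move=> *; apply: cm.
under [RHS]eq_bigr => j _ do rewrite binS expgD.
rewrite [RHS]prodgM_commute; last by move=> *; apply: cm.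
set P := \prod_(j < m.+1) (iter j N c ^+ 'C(k, j.+1)).
have XY : \prod_(j < m.+1) (N (iter j N c)) ^+ 'C(k, j.+1) * c =
          \prod_(j < m.+1) (iter j N c) ^+ 'C(k, j).
  rewrite big_ord_recr big_ord_recl /=.
  have -> : N (iter m N c) = 1 by exact: vc.
  by rewrite expg1n mulg1 bin0 expg1 cm.
by rewrite -mulgA (cm P c) mulgA XY cm.
Qed.

Lemma formula k : t (g ^+ k) = \prod_(j < p.-1) (iter j N c) ^+ 'C(k, j.+1).
Proof.
have vc := iterN_vanish c_Gq.
have m0 : p.-1 = (p.-2).+1 by case: p pp => [|[|p']].
by move: vc; rewrite m0 => vc; apply: formula_gen.
Qed.

Lemma bin_div e j : (j.+1 < p)%N -> (p ^ e %| 'C(p ^ e, j.+1))%N.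
Proof.
move=> jp; rewrite -(@Gauss_dvdr _ j.+1); last first.
  apply: coprimeXl; rewrite prime_coprime //; apply/negP => /dvdn_leq.
  by move=> /(_ isT); rewrite leqNgt jp.
by rewrite -mul_bin_diag dvdn_mulr.
Qed.

Lemma F1 e : c ^+ (p ^ e) = 1 -> t (g ^+ (p ^ e)) = 1.
Proof.
move=> ce; rewrite formula big1 // => j _.
have jp : (j.+1 < p)%N by have := ltn_ord j; have := prime_gt1 pp; lia.
have /dvdnP[r ->] := bin_div e jp.
by rewrite mulnC expgM -iterNX ce iterN1 expg1n.
Qed.

Lemma prodgXn m (F : 'I_m -> gT) n :
  (\prod_(j < m) F j) ^+ n = \prod_(j < m) (F j ^+ n).
Proof.
elim: n => [|n IH]; first by rewrite expg0 big1 // => j _; rewrite expg0.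
by rewrite expgS IH -prodgM_commute //; [apply: eq_bigr => j _; rewrite expgS | move=> *; apply: cm].
Qed.

Lemma fact_p'nat : p^'.-nat (p.-1)`!.
Proof.
rewrite p'natE // fact_prod Euclid_dvd_prod // big_nat_cond big1 // => i /andP[/andP[i1 ip] _].
apply/negbTE/negP => /dvdn_leq => /(_ i1); move: ip; case: p pp => [|[|p']] //= _; lia.
Qed.

Lemma F2 e : t (g ^+ (p ^ e)) = 1 -> c ^+ (p ^ e) = 1.
Proof.
move=> te; set w := c ^+ (p ^ e); set L := (p.-1)`!.
have pw : p.-elt w by apply: p_eltX c_pelt.
have E : \prod_(j < p.-1) (iter j N w) ^+ (L %/ j.+1 * 'C((p ^ e).-1, j)) = 1.
  transitivity (t (g ^+ (p ^ e)) ^+ L); last by rewrite te expg1n.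
  rewrite formula prodgXn; apply: eq_bigr => j _; rewrite -expgM.
  have jp : (j.+1 < p)%N by have := ltn_ord j; have := prime_gt1 pp; lia.
  have h1 := mul_bin_diag (p ^ e) j.
  have h2 : L = (L %/ j.+1 * j.+1)%N by rewrite divnK // dvdn_fact //; lia.
  have -> : ('C(p ^ e, j.+1) * L = p ^ e * (L %/ j.+1 * 'C((p ^ e).-1, j)))%N.
    rewrite {1}h2; move: h1; set C := 'C(p ^ e, j.+1); set C' := 'C(_, j); nia.
  by rewrite expgM iterNX.
have cw : coprime #[w] L := pnat_coprime pw fact_p'nat.
have m0 : p.-1 = (p.-2).+1 by case: p pp => [|[|p']].
suff : forall i, w \in H i by move/(_ p.-1); rewrite H_last => /set1P.
elim => [|i IH]; first by rewrite /H /= inE.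
move: E; rewrite m0 big_ord_recl /= divn1 bin0 muln1.
set Q := \prod_(_ < _) _ => wQ.
have HQ : Q \in H i.+1.
  apply: group_prod => j _; rewrite groupX //.
  apply: (subsetP (H_decn (leq_addr j i.+1))).
  rewrite addSnnS; exact: (iterN_H _ IH).
have wL : w ^+ L \in H i.+1.
  by rewrite (canRL (mulgK Q) wQ) mul1g groupV.
have : generator <[w]> (w ^+ L) by rewrite generator_coprime.
move/eqP => ew; have : <[w]> \subset H i.+1 by rewrite ew cycle_subG.
by move/subsetP; apply; apply: cycle_id.
Qed.

Lemma order_t : #[t g] = #[g].
Proof.
have key e : (g ^+ (p ^ e) == 1) = (c ^+ (p ^ e) == 1).
  apply/eqP/eqP => [ge | ce]; first by apply: F2; rewrite ge t1.
  apply: t_inj; rewrite ?groupX ?group1 // t1; exact: F1.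
have [a ea] := p_natP pg; have [b eb] := p_natP c_pelt.
rewrite -/c; apply/eqP; rewrite eqn_dvd !order_dvdn.
have h1 : c ^+ #[g] == 1 by rewrite ea -key -ea expg_order.
have h2 : g ^+ #[c] == 1 by rewrite eb key -eb expg_order.
by rewrite h1 h2.
Qed.

End P.

Lemma order_t_all : (forall p, prime p -> logn p #|[set: gT]| < p)%N ->
  {in Gam, forall g, #[t g] = #[g]}.
Proof.
move=> hyp g Gg; apply: eqn_from_log; rewrite ?order_gt0 // => p.
case pp: (prime p); last by rewrite (lognE p #[t g]) (lognE p #[g]) pp.
rewrite -(logn_part p #[t g]) -(logn_part p #[g]) -!order_constt.
set gp := g.`_p; set gq := g.`_p^'.
have Ggp : gp \in Gam by rewrite groupX.
have Ggq : gq \in Gam by rewrite groupX.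
have qq : p^'.-elt gq := p_elt_constt _ _.
have pgp : p.-elt gp := p_elt_constt _ _.
have -> : (t g).`_p = t gp.
  rewrite -{1}(consttC p g) -/gp -/gq tM // (cMc (A gq (t gp))) -(A_constt _ _ Ggq).
  rewrite (constt_p_elt (c_pelt Ggp pgp)) (key4A pp Ggq qq (c_pelt Ggp pgp)).
  have := key4 (q := p) Ggq qq; rewrite /tau => ->; exact: mulg1.
by rewrite (order_t pp (hyp p pp) Ggp pgp).
Qed.

End Main.

Theorem theorem3 (aT : finGroupType) (Gamma : {group aT}) :
  abelian Gamma ->
  (forall p : nat, prime p -> (p %| #|Gamma|)%N ->
     (logn p #|Gamma| < p.-1)%N || ((p <= 3)%N && (logn p #|Gamma| < p)%N)) ->
  forall gT : finGroupType,
    abelian [set: gT] -> #|[set: gT]| = #|Gamma| ->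
    (0 < e_HGS gT Gamma)%N ->
    [set: gT] \isog Gamma.
Proof.
move=> cGam hyp gT cG eG /card_gt0P[X /imsetP[f]].
rewrite inE => Hf _.
have hp : forall p, prime p -> (logn p #|[set: gT]| < p)%N.
  move=> p pp; rewrite eG.
  have [dp | ndp] := boolP (p %| #|Gamma|)%N.
    have := hyp p pp dp; have := prime_gt1 pp; case/orP: (hyp p pp dp) => _; lia.
  rewrite lognE pp /= (negbTE ndp) andbF; exact: prime_gt0.
apply: (isog_of_order_bij (t := t f)) => //.
- exact: t_inj Hf.
- apply/setP => y; rewrite inE; have [g Gg <-] := t_surj Hf y; exact: imset_f.
- exact: order_t_all cGam cG Hf hp.
Qed.
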